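(* Let $\mathcal{H}$ be a real Hilbert space, let $\ell\geq 0$, and let $g\in \Gamma_0(\mathcal{H})$ be such that its Legendre–Fenchel conjugate $g^{\ast}$ is bounded from below and $$\Vert x\Vert-\ell \leq \Vert \operatorname{prox}_g(x)\Vert \quad \text{for all } x\in \mathcal{H}.$$ Then $g(x)-g(0)\leq \ell \Vert x\Vert$ for all $x\in\mathcal{H}$. Moreover, if $\ell=0$, then $g$ is constant.
   Context: $\Gamma_0(\mathcal{H})$ denotes the set of proper, convex, lower semicontinuous functions $\mathcal{H}\to\mathbb{R}\cup\{+\infty\}$. The conjugate is $g^{\ast}(x^* )=\sup_{v\in\mathcal{H}}\{\langle x^*,v\rangle-g(v)\}$. For $g\in\Gamma_0(\mathcal{H})$, $\operatorname{prox}_g(x)=\operatorname{argmin}_{y\in\mathcal{H}}\{g(y)+\tfrac12\Vert x-y\Vert^2\}$. *)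

(* Defs.v *)
From HB Require Import structures.
From mathcomp Require Import all_boot all_order all_algebra.
From mathcomp Require Import all_classical all_reals all_analysis.
Set Implicit Arguments. Unset Strict Implicit. Unset Printing Implicit Defensive.
Import Order.TTheory GRing.Theory Num.Theory.
Import numFieldNormedType.Exports.
Local Open Scope classical_set_scope.
Local Open Scope ring_scope.

(* A real Hilbert space is a complete normed space H over the reals R whose
   norm is induced by a (real, symmetric, bilinear) inner product. *)
Definition is_inner_product (R : realType) (H : completeNormedModType R)
  (ip : H -> H -> R) : Prop :=
  [/\ (forall x y, ip x y = ip y x),
      (forall a x y z, ip (a *: x + y) z = a * ip x z + ip y z)
    & (forall x, `|x| ^+ 2 = ip x x)].

(* g : H -> R \cup {+oo}, encoded in the extended reals. *)
Definition proper_fun (R : realType) (H : completeNormedModType R)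
  (g : H -> \bar R) : Prop :=
  (forall x, g x != -oo%E) /\ (exists x, g x \is a fin_num).

Definition convex_fun (R : realType) (H : completeNormedModType R)
  (g : H -> \bar R) : Prop :=
  forall (x y : H) (t : R), 0 <= t <= 1 ->
    (g (t *: x + (1 - t) *: y)%R <= t%:E * g x + (1 - t)%:E * g y)%E.

Definition lsc_fun (R : realType) (H : completeNormedModType R)
  (g : H -> \bar R) : Prop :=
  forall a : R, closed [set x | (g x <= a%:E)%E].

Definition Gamma0 (R : realType) (H : completeNormedModType R)
  (g : H -> \bar R) : Prop :=
  [/\ proper_fun g, convex_fun g & lsc_fun g].

(* Legendre-Fenchel conjugate (dual identified with H via the inner product) *)
Definition conjugate (R : realType) (H : completeNormedModType R)
  (ip : H -> H -> R) (g : H -> \bar R) (xs : H) : \bar R :=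
  ereal_sup [set ((ip xs v)%:E - g v)%E | v in [set: H]].

Definition is_prox (R : realType) (H : completeNormedModType R)
  (g : H -> \bar R) (x p : H) : Prop :=
  forall y : H,
    (g p + (2^-1 * `|x - p| ^+ 2)%:E <= g y + (2^-1 * `|x - y| ^+ 2)%:E)%E.

(* Main.v *)
Require Import Defs.
From HB Require Import structures.
From mathcomp Require Import all_boot all_order all_algebra.
From mathcomp Require Import all_classical all_reals all_analysis.
From mathcomp Require Import ring lra.
Import Order.TTheory GRing.Theory Num.Theory.
Import numFieldNormedType.Exports.
Local Open Scope classical_set_scope.
Local Open Scope ring_scope.

Section S.
Context (R : realType) (H : completeNormedModType R) (ip : H -> H -> R) (hip : is_inner_product ip).

Lemma ipDl a x y z : ip (a *: x + y) z = a * ip x z + ip y z.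
Proof. by case: hip. Qed.
Lemma ipC x y : ip x y = ip y x.
Proof. by case: hip. Qed.
Lemma ipn x : `|x| ^+ 2 = ip x x.
Proof. by case: hip. Qed.
Lemma ip0l z : ip 0 z = 0.
Proof. have := ipDl 1 0 0 z; rewrite scaler0 addr0 mul1r => h.
by apply: (addrI (ip 0 z)); rewrite addr0 -h. Qed.
Lemma ipZl a x z : ip (a *: x) z = a * ip x z.
Proof. by rewrite -[a *: x]addr0 ipDl ip0l addr0. Qed.
Lemma ipDl' x y z : ip (x + y) z = ip x z + ip y z.
Proof. by have := ipDl 1 x y z; rewrite scale1r mul1r. Qed.
Lemma ipZr a x z : ip z (a *: x) = a * ip z x.
Proof. by rewrite ipC ipZl ipC. Qed.
Lemma ipDr x y z : ip z (x + y) = ip z x + ip z y.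
Proof. by rewrite ipC ipDl' !(ipC z). Qed.

Lemma normDZ2 a b x y : `|a *: x + b *: y| ^+ 2 =
  a ^+ 2 * `|x| ^+ 2 + 2 * a * b * ip x y + b ^+ 2 * `|y| ^+ 2.
Proof.
rewrite !ipn ipDl' !ipDr !ipZl !ipZr (ipC y x). ring.
Qed.

Lemma CS x y : ip x y <= `|x| * `|y|.
Proof.
have [y0|yn0] := eqVneq y 0.
  by rewrite y0 ipC ip0l normr0 mulr0.
have ny : 0 < `|y| by rewrite normr_gt0.
have := normDZ2 1 (- (`|x| / `|y|)) x y.
have : 0 <= `|1 *: x + - (`|x| / `|y|) *: y| ^+ 2 by apply: sqr_ge0.
move=> h1 h2; rewrite h2 in h1.
have e : (`|x| / `|y|) ^+ 2 * `|y| ^+ 2 = `|x| ^+ 2.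
  by rewrite expr_div_n mulrVK // unitfE sqrf_eq0 gt_eqF.
have : 2 * (`|x| / `|y|) * ip x y <= 2 * `|x| ^+ 2.
  move: h1; rewrite sqrrN e; lra.
have nx := normr_ge0 x.
move=> h3.
have : (`|x| / `|y|) * (ip x y - `|x| * `|y|) <= 0.
  rewrite mulrBr (mulrC _ `|y|) mulrA divfK ?gt_eqF //. rewrite expr2 in h3. lra.
have [x0|xp] := eqVneq `|x| 0.
  move=> _; move/eqP: x0; rewrite normr_eq0 => /eqP ->. by rewrite ip0l normr0 mul0r.
have q : 0 < `|x| / `|y| by rewrite divr_gt0 // lt_def xp nx.
rewrite pmulr_rle0 //; lra.
Qed.

Context (g : H -> \bar R) (hg : Gamma0 g).

Lemma g_nm x : g x != -oo%E.
Proof. by case: hg => -[]. Qed.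
Lemma g_cvx : convex_fun g.
Proof. by case: hg. Qed.
Lemma g_lsc : lsc_fun g.
Proof. by case: hg. Qed.

Lemma g_fin x : (g x < +oo)%E -> g x = (fine (g x))%:E.
Proof.
move=> h; rewrite fineK // fin_numE g_nm /=; by rewrite lt_eqF.
Qed.

Lemma g_cvx_real x y gx gy t : g x = gx%:E -> g y = gy%:E -> 0 <= t <= 1 ->
  (g (t *: x + (1 - t) *: y)%R <= (t * gx + (1 - t) * gy)%:E)%E.
Proof.
move=> hx hy ht; have := @g_cvx x y t ht; rewrite hx hy. by rewrite -!EFinM -EFinD.
Qed.

Lemma lin_lb x0 g0 : g x0 = g0%:E -> exists K : R, 0 <= K /\
  forall y, ((g0 - 1 - K * `|y - x0|)%:E <= g y)%E.
Proof.
move=> hx0.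
pose S := [set x | (g x <= (g0 - 1)%:E)%E].
have cS : closed S by apply: g_lsc.
have oS : open (~` S) by rewrite openC.
have Sx0 : (~` S) x0 by rewrite /S /= hx0 lee_fin; lra.
move: oS; rewrite openE => /(_ x0 Sx0) /nbhs_ballP [d d0 hd].
rewrite /= in d0.
exists (2 / d); split; first by rewrite divr_ge0 // ltW.
move=> y.
have nS : forall w, `|x0 - w| < d -> ((g0 - 1)%:E < g w)%E.
  move=> w hw; have : (~` S) w by apply: hd; rewrite -ball_normE /=.
  by rewrite /S /= => /negP; rewrite -ltNge.
case: (eqVneq (g y) +oo%E) => [->|gyn]; first by rewrite leey.
have [gy hgy] : exists gy, g y = gy%:E.
  by exists (fine (g y)); apply: g_fin; rewrite lt_neqAle gyn leey.
rewrite hgy lee_fin.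
have dd := normr_ge0 (y - x0).
have [small|big] := ltP `|y - x0| (d / 2).
  have hyd : `|x0 - y| < d by rewrite distrC; apply: (lt_trans small); lra.
  have := nS y hyd; rewrite hgy lte_fin => h.
  have : 0 <= 2 / d * `|y - x0| by rewrite mulr_ge0 // divr_ge0 // ltW.
  lra.
pose D := `|y - x0|.
have Dp : 0 < D by rewrite /D; apply: lt_le_trans big; rewrite divr_gt0.
pose s := d / 2 / D.
have s0 : 0 <= s by rewrite /s divr_ge0 // divr_ge0 // ltW.
have s1 : s <= 1 by rewrite /s ler_pdivrMr // mul1r.
have := @g_cvx_real y x0 gy g0 s hgy hx0 ltac:(by rewrite s0 s1).
have hw : `|x0 - (s *: y + (1 - s) *: x0)| < d.
  have -> : x0 - (s *: y + (1 - s) *: x0) = - (s *: (y - x0)).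
    by rewrite scalerBl scale1r scalerBr opprB opprD addrA opprB addrC addrA addrNK.
  rewrite normrN normrZ ger0_norm // /s -/D divfK ?gt_eqF //; lra.
move: (nS _ hw) => h1 h2; have := lt_le_trans h1 h2; rewrite lte_fin => h3.
have h4 : s * (gy - g0) > -1 by lra.
have e1 : D * s = d / 2 by rewrite /s mulrC divfK ?gt_eqF.
have e2 : 2 / d * (d / 2) = 1 by field; rewrite gt_eqF.
have h5 : (d / 2) * (gy - g0) > - D by rewrite -e1 -mulrA; nra.
have h7 : (2 / d) * ((d / 2) * (gy - g0)) > (2 / d) * (- D).
  by rewrite ltr_pM2l // divr_gt0.
rewrite mulrA e2 mul1r in h7. rewrite -/D; lra.
Qed.

Lemma vec_cvx (z a b : H) (t : R) :
  z - (t *: a + (1 - t) *: b) = t *: (z - a) + (1 - t) *: (z - b).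
Proof.
rewrite !scalerBr addrACA -opprD -scalerDl (addrC t) subrK scale1r.
by []. Qed.

Lemma para (A B : H) :
  `|2^-1 *: A + (1 - 2^-1) *: B| ^+ 2 =
  2^-1 * `|A| ^+ 2 + 2^-1 * `|B| ^+ 2 - 4^-1 * `|A - B| ^+ 2.
Proof.
rewrite normDZ2 (_ : A - B = 1 *: A + (-1) *: B); last by rewrite scale1r scaleN1r.
rewrite normDZ2. by field.
Qed.


Lemma einv_small (d : R) : 0 < d -> exists N : nat, forall n, (N <= n)%N -> n.+1%:R^-1 < d.
Proof.
move=> d0; have [N _ hN] := near_infty_natSinv_lt (@PosNum _ d d0).
by exists N => n hn; apply: hN.
Qed.

Lemma prox_ex (c : R) (z : H) : 0 < c -> exists p gp, g p = gp%:E /\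
  forall y, ((gp + c * 2^-1 * `|z - p| ^+ 2)%:E <= g y + (c * 2^-1 * `|z - y| ^+ 2)%:E)%E.
Proof.
move=> c0.
have [x0 fx0] : exists x0, g x0 \is a fin_num by case: hg => -[].
pose g0 := fine (g x0).
have hx0 : g x0 = g0%:E by rewrite fineK.
have [K [K0 hK]] := @lin_lb x0 g0 hx0.
pose q y := c * 2^-1 * `|z - y| ^+ 2.
pose F y := (g y + (q y)%:E)%E.
pose w := K ^+ 2 / (2 * c).
have hw : 2 * c * w = K ^+ 2 by rewrite /w mulrC divfK // gt_eqF // mulr_gt0.
pose B := g0 - 1 - K * `|z - x0| - w.
have FB : forall y, (B%:E <= F y)%E.
  move=> y; rewrite /F; apply: le_trans (leeD (hK y) (lexx (q y)%:E)).
  rewrite -EFinD lee_fin /B /q.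
  have t1 := ler_distD z y x0; rewrite (distrC y z) in t1.
  have r0 := normr_ge0 (z - y).
  have t2 : K * `|z - y| <= c * 2^-1 * `|z - y| ^+ 2 + w.
    rewrite -(ler_pM2l (x := 2 * c)) ?mulr_gt0 //. rewrite mulrDr hw.
    have := sqr_ge0 (c * `|z - y| - K). nra.
  have t3 : K * `|y - x0| <= K * `|z - y| + K * `|z - x0|.
    by rewrite -mulrDr ler_wpM2l.
  lra.
pose S := [set F y | y in [set: H]].
have mule : (ereal_inf S <= F x0)%E by apply: ereal_inf_lbound; exists x0.
have muge : (B%:E <= ereal_inf S)%E by apply: le_ereal_inf_tmp => _ [y _ <-]; exact: FB y.
have Fx0 : F x0 = (g0 + q x0)%:E by rewrite /F hx0.
have finS : ereal_inf S \is a fin_num.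
  rewrite fin_numElt; apply/andP; split.
    by apply: lt_le_trans muge; rewrite ltNye.
  by apply: le_lt_trans mule _; rewrite Fx0 ltry.
pose mu := fine (ereal_inf S).
have hmu : ereal_inf S = mu%:E by rewrite fineK.
have mulb : forall y, (mu%:E <= F y)%E.
  by move=> y; rewrite -hmu; apply: ereal_inf_lbound; exists y.
pose e (n : nat) : R := n.+1%:R^-1.
have e0 : forall n, 0 < e n by move=> n; rewrite /e invr_gt0 ltr0Sn.
have hseq : forall n : nat, exists y, (F y < (mu + e n)%:E)%E.
  move=> n; have [_ [y _ <-] h] := lb_ereal_inf_adherent (e0 n) finS.
  by exists y; rewrite EFinD -hmu.
have [f hf] := choice hseq.
have Ffin : forall y, (F y < +oo)%E -> g y = (fine (g y))%:E.
  move=> y hy; apply: g_fin; rewrite ltey; apply/negP => /eqP e1.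
  by move: hy; rewrite /F e1 /= ltxx.
pose a n := fine (g (f n)).
have ha : forall n, g (f n) = (a n)%:E.
  move=> n; apply: Ffin; apply: lt_trans (hf n) _; exact: ltry.
have hfa : forall n, a n + q (f n) < mu + e n.
  by move=> n; have := hf n; rewrite /F ha -EFinD lte_fin.
have mid : forall n m, `|f n - f m| ^+ 2 <= 4 * (e n + e m) / c.
  move=> n m.
  pose v := 2^-1 *: f n + (1 - 2^-1) *: f m.
  have h1 := @g_cvx_real (f n) (f m) (a n) (a m) 2^-1 (ha n) (ha m)
    ltac:(by rewrite invr_ge0 ler0n /= invf_le1 // ler1n).
  have h2 := mulb v; rewrite /F in h2.
  have h3 := le_trans h2 (leeD h1 (lexx (q v)%:E)).
  rewrite -EFinD lee_fin /q /v vec_cvx para in h3.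
  have e3 : (z - f n) - (z - f m) = f m - f n.
    by rewrite opprB addrC addrA subrK.
  rewrite e3 (distrC (f m) (f n)) in h3.
  have := hfa n; have := hfa m; rewrite /q.
  move=> h4 h5.
  rewrite ler_pdivlMr //. nra.
have cf : cauchy_ex (f @ \oo).
  move=> eps eps0.
  pose del := c * eps ^+ 2 / 8.
  have del0 : 0 < del by rewrite /del divr_gt0 // mulr_gt0 // exprn_gt0.
  have [N hN] := @einv_small del del0.
  exists (f N); exists N => // n /= hn.
  rewrite -ball_normE /=.
  have h1 := mid N n; have h2 := hN N (leqnn N); have h3 := hN n hn.
  rewrite -/(e N) -/(e n) in h2 h3.
  have h4 : 4 * (e N + e n) / c < eps ^+ 2.
    rewrite ltr_pdivrMr //. have : del * 8 = c * eps ^+ 2 by rewrite /del divfK.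
    lra.
  have h5 := le_lt_trans h1 h4.
  have := normr_ge0 (f N - f n). nra.
have cvf : cvg (f @ \oo) by apply: cauchy_cvg; apply: cauchy_exP.
pose p := lim (f @ \oo).
have fp : f @ \oo --> p by [].
have epsb : forall eps, 0 < eps -> (g p <= (mu - q p + eps)%:E)%E.
  move=> eps eps0.
  pose r := `|z - p|.
  have r0 : 0 <= r := normr_ge0 _.
  have cr1 : 0 < c * r + 1 by have := mulr_ge0 (ltW c0) r0; lra.
  pose del := eps / (2 * (c * r + 1)).
  have del0 : 0 < del by rewrite /del divr_gt0 // mulr_gt0.
  have hd : del * (2 * (c * r + 1)) = eps by rewrite /del divfK // gt_eqF // mulr_gt0.
  have eps2 : 0 < eps / 2 by rewrite divr_gt0.
  have [N hN] := @einv_small (eps / 2) eps2.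
  have cl := g_lsc (mu - q p + eps).
  have := @closed_cvg _ _ \oo eventually_filter f _ cl. move=> hh. apply: hh; last exact: fp.
  have hc := cvgr_dist_lt _ _ fp _ del0.
  near=> n.
  have hn1 : `|p - f n| < del by near: n; exact: hc.
  have hn2 : (N <= n)%N by near: n; exists N => // k.
  rewrite /= ha lee_fin.
  have h1 := hfa n; have h2 := hN n hn2; rewrite -/(e n) in h2.
  pose s := `|z - f n|.
  have s0 : 0 <= s := normr_ge0 _.
  have ts := ler_distD (f n) z p; rewrite (distrC (f n) p) -/r -/s in ts.
  have hs : r ^+ 2 - 2 * r * del <= s ^+ 2.
    have [rd|rd] := leP del r.
      have : r - del <= s by lra.
      move=> h; have : (r - del) ^+ 2 <= s ^+ 2.
        by rewrite ler_sqr // nnegrE; lra.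
      have := sqr_ge0 del; nra.
    have := sqr_ge0 s; nra.
  have hq : q p - c * r * del <= q (f n).
    rewrite /q -/r -/s; nra.
  have hcrd : c * r * del <= eps / 2 by nra.
  lra.
have gpf : g p = (fine (g p))%:E.
  apply: g_fin; apply: le_lt_trans (epsb 1 ltr01) _; exact: ltry.
pose gp := fine (g p).
have gple : gp <= mu - q p.
  apply/ler_addgt0Pr => ee ee0; have := epsb ee ee0; by rewrite gpf lee_fin.
exists p, gp; split => // y.
apply: le_trans (mulb y); rewrite lee_fin; rewrite /q in gple; lra.
Unshelve. all: by end_near.
Qed.

Lemma ipNl u w : ip (- u) w = - ip u w.
Proof. by rewrite -scaleN1r ipZl mulN1r. Qed.
Lemma ipBr z x y : ip z (x - y) = ip z x - ip z y.
Proof. by rewrite ipDr -scaleN1r ipZr mulN1r. Qed.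

Lemma vec_lin (z y p : H) (t : R) :
  z - (t *: y + (1 - t) *: p) = 1 *: (z - p) + (- t) *: (y - p).
Proof.
rewrite scale1r scaleNr scalerBr scalerBl scale1r.
rewrite opprD opprB addrA.
by rewrite opprB addrACA [RHS]addrACA (addrC (- p)).
Qed.

Lemma prox_sub c z p gp : 0 < c -> g p = gp%:E ->
  (forall y, ((gp + c * 2^-1 * `|z - p| ^+ 2)%:E <= g y + (c * 2^-1 * `|z - y| ^+ 2)%:E)%E) ->
  forall y, ((gp + c * ip (z - p) (y - p))%:E <= g y)%E.
Proof.
move=> c0 hp hmin y.
case: (eqVneq (g y) +oo%E) => [->|gyn]; first by rewrite leey.
have [gy hgy] : exists gy, g y = gy%:E.
  by exists (fine (g y)); apply: g_fin; rewrite ltey.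
rewrite hgy lee_fin.
pose k := c * 2^-1 * `|y - p| ^+ 2.
have k0 : 0 <= k by rewrite /k mulr_ge0 // ?sqr_ge0 // mulr_ge0 // ?invr_ge0 // ltW.
apply/ler_addgt0Pr => eps eps0.
pose t := eps / (k + eps).
have ke : 0 < k + eps by lra.
have t0 : 0 < t by rewrite divr_gt0.
have t1 : t <= 1 by rewrite /t ler_pdivrMr // mul1r; lra.
have tk : t * k <= eps.
  have : t * (k + eps) = eps by rewrite /t divfK // gt_eqF.
  nra.
have h1 := hmin (t *: y + (1 - t) *: p).
have h2 := @g_cvx_real y p gy gp t hgy hp ltac:(by rewrite (ltW t0) t1).
have h3 := le_trans h1 (leeD h2 (lexx _)).
rewrite -EFinD lee_fin vec_lin normDZ2 in h3.
rewrite /k in tk.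
have : t * (gp + c * ip (z - p) (y - p) - gy) <= t * (t * k).
  rewrite /k. nra.
move=> h4.
have h5 : gp + c * ip (z - p) (y - p) - gy <= t * k.
  by move: h4; rewrite ler_pM2l.
rewrite /k in h5. lra.
Qed.


Section B.
Context (l : R) (hl : 0 <= l)
  (hconj : exists m : R, forall xs : H, (m%:E <= conjugate ip g xs)%E)
  (hprox : forall x p : H, is_prox g x p -> `|x| - l <= `|p|).

Lemma sub_bound p gp u : g p = gp%:E ->
  (forall y, ((gp + ip u (y - p))%:E <= g y)%E) -> `|u| <= l.
Proof.
move=> hp hsub.
rewrite leNgt; apply/negP => lu.
have [m hm] := hconj.
pose dl := `|u| - l.
have dl0 : 0 < dl by rewrite /dl; lra.
have u0 : 0 < `|u| by have := hl; lra.
pose C0 := ip u p - gp - m.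
pose s := (`|C0| + 1) / (dl * `|u|).
have s0 : 0 < s by rewrite /s divr_gt0 // ?mulr_gt0 //; have := normr_ge0 C0; lra.
have hs : s * `|u| * dl = `|C0| + 1.
  by rewrite /s -mulrA (mulrC `|u|) divfK // gt_eqF // mulr_gt0.
pose z := (s + 1) *: u.
have [q [gq [hq hmin]]] := @prox_ex 1 z ltr01.
have isp : is_prox g z q.
  by rewrite /is_prox => y; have := hmin y; rewrite hq !mul1r EFinD.
have hz := hprox _ _ isp.
rewrite /z normrZ ger0_norm in hz; last by lra.
pose v := z - q.
have hsubq := @prox_sub 1 z q gq ltr01 hq hmin.
have hmv : m <= ip v q - gq.
  have := hm v; rewrite /conjugate => h.
  have : (ereal_sup [set ((ip v w)%:E - g w)%E | w in [set: H]] <= (ip v q - gq)%:E)%E.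
    apply: ge_ereal_sup => _ [w _ <-].
    case: (eqVneq (g w) +oo%E) => [->|gwn]; first by rewrite /= addeNy leNye.
    have [gw hgw] : exists gw, g w = gw%:E.
      by exists (fine (g w)); apply: g_fin; rewrite ltey.
    rewrite hgw -EFinB lee_fin.
    have := hsubq w; rewrite hgw lee_fin mul1r -/v ipBr. lra.
  move=> h2; have := le_trans h h2; by rewrite lee_fin.
have hpq := hsub q; rewrite hq lee_fin ipBr in hpq.
have ev : ip v q = (s + 1) * ip u q - `|q| ^+ 2.
  by rewrite /v /z ipC ipBr ipZr -ipn (ipC q u).
have hC : `|q| ^+ 2 - s * ip u q <= C0.
  rewrite /C0; move: hmv; rewrite ev. lra.
have hsq := sqr_ge0 `|1 *: q + (- s) *: u|.
rewrite normDZ2 (ipC q u) in hsq.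
have hq1 : s * `|u| + dl <= `|q| by rewrite /dl; lra.
have hC0 := ler_norm C0.
have nq := normr_ge0 q.
have : (s * `|u| + dl) ^+ 2 <= `|q| ^+ 2.
  by rewrite ler_sqr // nnegrE; have := mulr_ge0 (ltW s0) (ltW u0); lra.
move=> hq2.
have := sqr_ge0 dl.
nra.
Qed.

Lemma lipA y x0 gx0 : g x0 = gx0%:E -> (g y <= (gx0 + l * `|y - x0|)%:E)%E.
Proof.
move=> hx0.
have key : forall eps, 0 < eps -> (g y <= (gx0 + l * `|y - x0| + eps)%:E)%E.
  move=> eps eps0.
  pose S := [set x | (g x <= (gx0 + l * `|y - x0| + eps)%:E)%E].
  have cl : closed S := g_lsc _.
  have e := (closure_id S).1 cl.
  suff h : closure S y by rewrite -e in h; exact: h.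
  move=> B /nbhs_ballP [r r0 hB]; rewrite /= in r0.
  have hl0 := hl.
  pose c := (l ^+ 2 + 1) / eps + (l + 1) / r.
  have c1 : 0 <= (l ^+ 2 + 1) / eps by rewrite divr_ge0 // ?ltW //; have := sqr_ge0 l; lra.
  have c2 : 0 < (l + 1) / r by rewrite divr_gt0 //; lra.
  have c0 : 0 < c by rewrite /c; lra.
  have e1 : eps * ((l ^+ 2 + 1) / eps) = l ^+ 2 + 1 by rewrite mulrC divfK // gt_eqF.
  have e2 : r * ((l + 1) / r) = l + 1 by rewrite mulrC divfK // gt_eqF.
  have ec : l ^+ 2 + 1 <= eps * c.
    rewrite /c mulrDr e1; have := mulr_gt0 eps0 c2; lra.
  have rc : l + 1 <= r * c.
    rewrite /c mulrDr e2; have := mulr_ge0 (ltW r0) c1; lra.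
  have [p [gp [hp hmin]]] := @prox_ex c y c0.
  have hsub := @prox_sub c y p gp c0 hp hmin.
  have hu : `|c *: (y - p)| <= l.
    apply: (@sub_bound p gp _ hp) => w; rewrite ipZl; exact: hsub w.
  rewrite normrZ gtr0_norm // in hu.
  have hx := hsub x0; rewrite hx0 lee_fin in hx.
  have cs := CS (- (y - p)) (x0 - p); rewrite ipNl normrN in cs.
  have td := ler_distD y x0 p; rewrite (distrC x0 y) in td.
  have nyp := normr_ge0 (y - p).
  have nxp := normr_ge0 (x0 - p).
  have hyp : `|y - p| < r by nra.
  have hlyp : l * `|y - p| <= eps by nra.
  have hc : c * ip (y - p) (x0 - p) >= - (c * (`|y - p| * `|x0 - p|)) by nra.
  have hc2 : c * (`|y - p| * `|x0 - p|) <= l * `|x0 - p| by nra.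
  exists p; split.
    rewrite /S /= hp lee_fin. nra.
  by apply: hB; rewrite -ball_normE /=.
case: (eqVneq (g y) +oo%E) => [ey|gyn].
  by have := key 1 ltr01; rewrite ey leNgt ltry.
have [gy hgy] : exists gy, g y = gy%:E.
  by exists (fine (g y)); apply: g_fin; rewrite ltey.
rewrite hgy lee_fin; apply/ler_addgt0Pr => ee ee0.
by have := key ee ee0; rewrite hgy lee_fin.
Qed.

End B.
End S.


Theorem proposition3 (R : realType) (H : completeNormedModType R)
  (ip : H -> H -> R) (hip : is_inner_product ip)
  (l : R) (hl : 0 <= l) (g : H -> \bar R) (hg : Gamma0 g)
  (hconj : exists m : R, forall xs : H, (m%:E <= conjugate ip g xs)%E)
  (hprox : forall x p : H, is_prox g x p -> `|x| - l <= `|p|) :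
  (g (0 : H)%R \is a fin_num /\ forall x : H, (g x <= g (0 : H)%R + (l * `|x|)%:E)%E) /\
  (l = 0 -> forall x y : H, g x = g y).
Proof.
have A := @lipA R H ip hip g hg l hl hconj hprox.
have [x0 fx0] : exists x0, g x0 \is a fin_num by case: hg => -[].
have hx0 : g x0 = (fine (g x0))%:E by rewrite fineK.
have hfin : forall y, (g y < +oo)%E -> g y = (fine (g y))%:E.
  by move=> y hy; apply: (@g_fin R H g hg).
have h0 : g 0 = (fine (g 0))%:E.
  apply: hfin; apply: le_lt_trans (A 0 _ _ hx0) _; exact: ltry.
have f0 : g 0 \is a fin_num by rewrite h0.
have part1 : forall x : H, (g x <= g (0 : H)%R + (l * `|x|)%:E)%E.
  by move=> x; have := A x 0 _ h0; rewrite subr0 EFinD -h0.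
split; first by split.
move=> l0 x y.
have hy : g y = (fine (g y))%:E.
  apply: hfin; apply: le_lt_trans (part1 y) _; by rewrite h0 -EFinD ltry.
have hx : g x = (fine (g x))%:E.
  apply: hfin; apply: le_lt_trans (part1 x) _; by rewrite h0 -EFinD ltry.
apply/le_anti/andP; split.
  by have := A x y _ hy; rewrite l0 mul0r addr0 -hy.
by have := A y x _ hx; rewrite l0 mul0r addr0 -hx.
Qed.
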